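(* For any integer $k$ and any $\epsilon>0$, there exist a prior $p$, a utility function $f$ and a policy $\pi$ that is greedy with respect to $f$ (and $p$) and selects $k$ elements, such that $\beta_\pi(f,p)=\epsilon$.
   Context: Finite ground set $V$, finite state set $Y$; a realization $\phi:V\to Y$ is drawn from prior $p$; $f:2^V\times\Phi_V\to\mathbb{R}$ is a utility function. A partial realization $\psi$ maps $\mathrm{dom}(\psi)\subseteq V$ to $Y$; $\phi\sim\psi$ means agreement on $\mathrm{dom}(\psi)$. A (possibly randomized) policy $\pi$ maps the observed partial realization to the next element to select or $\bot$ (terminate); $\psi_t$ denotes observations after $t$ selections; $E(\pi,\phi)$ is the set of selected elements; $c_{\mathrm{avg}}(\pi,p)=\mathbb{E}[|E(\pi,\phi)|]$. $\Delta^f_p(v\mid\psi)=\mathbb{E}[f(\{v\}\cup\mathrm{dom}(\psi),\phi)-f(\mathrm{dom}(\psi),\phi)\mid\phi\sim\psi]$. $\pi$ is greedy if for every $\psi$ with $\pi(\psi)\ne\bot$, $\Delta^f_p(\pi(\psi)\mid\psi)=\max_{v\in V}\Delta^f_p(v\mid\psi)$. A sub-policy of $\pi$ runs like $\pi$ but may terminate earlier. For $\tau\ge0,\rho\in[0,1]$, $\pi^{\tau,\rho}$ is the sub-policy of $\pi$ that with probability $\rho$ terminates as soon as every remaining element has expected marginal gain strictly smaller than $\tau$, and otherwise terminates as soon as every remaining element has expected marginal gain at most $\tau$. For each integer $i\le c_{\mathrm{avg}}(\pi,p)$, the sub-policy of this form with $c_{\mathrm{avg}}=i$ exists and is unique;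 denote it $\pi_i$. $\Delta^u_{\pi,i}$ is the smallest $u$ such that a.s., at termination time $t$ of $\pi_i$, $\Delta^f_p(v\mid\psi_t)\le u$ for all $v$; $\Delta^l_{\pi,i}$ is the largest $u$ such that a.s. for all $t$ until $\pi_i$ terminates, $\Delta^f_p(\pi_i(\psi_t)\mid\psi_t)\ge u$. The maximal gain ratio is $\beta_\pi(f,p)=\max_{i\in\mathbb{N},\,i\le c_{\mathrm{avg}}(\pi,p)}\Delta^u_{\pi,i}/\Delta^l_{\pi,i}$. *)

(* Defs.v *)
From HB Require Import structures.
From mathcomp Require Import all_boot all_order all_algebra.
From mathcomp Require Import reals.
Set Implicit Arguments. Unset Strict Implicit. Unset Printing Implicit Defensive.
Import Order.TTheory GRing.Theory Num.Theory.
Local Open Scope ring_scope.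

Section AdaptiveDefs.
Variables (R : realType) (V Y : finType).

Definition realization := {ffun V -> Y}.
Definition partial := {ffun V -> option Y}.

Definition empty_partial : partial := [ffun => None].
Definition dom (psi : partial) : {set V} := [set v | psi v != None].
Definition consistent (phi : realization) (psi : partial) : bool :=
  [forall v, if psi v is Some y then phi v == y else true].

Definition is_prior (p : realization -> R) : Prop :=
  (forall phi, 0 <= p phi) /\ \sum_(phi : realization) p phi = 1.

(* expected marginal gain Delta^f_p(v | psi)
   = E[f({v} u dom psi, phi) - f(dom psi, phi) | phi ~ psi]
   (conditional expectation; for psi of probability 0 it is 0 by the x/0 = 0 convention) *)
Definition gain (p : realization -> R) (f : {set V} -> realization -> R)
    (v : V) (psi : partial) : R :=
  (\sum_(phi : realization | consistent phi psi)
      p phi * (f (v |: dom psi) phi - f (dom psi) phi))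
  / (\sum_(phi : realization | consistent phi psi) p phi).

(* deterministic policy: observed partial realization -> next element or None (= bot) *)
Definition dpolicy := partial -> option V.

Definition upd (psi : partial) (v : V) (y : Y) : partial :=
  [ffun w => if w == v then Some y else psi w].

Definition step (d : dpolicy) (phi : realization) (psi : partial) : partial :=
  if d psi is Some v then upd psi v (phi v) else psi.

Definition obs (d : dpolicy) (phi : realization) (t : nat) : partial :=
  iter t (step d phi) empty_partial.

(* final observations (policies never reselect, so at most #|V| selections) *)
Definition final_obs (d : dpolicy) (phi : realization) : partial := obs d phi #|V|.

Definition selected (d : dpolicy) (phi : realization) : {set V} := dom (final_obs d phi).

(* A (possibly randomized) policy: a random seed drawn from a finite distribution,
   together with a deterministic policy for each seed. *)
Record rpolicy := RPolicy {
  seed : finType;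
  weight : seed -> R;
  act : seed -> dpolicy
}.
Arguments weight r s : clear implicits.
Arguments act r s : clear implicits.

Definition is_rpolicy (pi : rpolicy) : Prop :=
  [/\ forall s, 0 <= weight pi s,
      \sum_(s : seed pi) weight pi s = 1 &
      forall s psi v, act pi s psi = Some v -> psi v = None].

Definition cavg (p : realization -> R) (pi : rpolicy) : R :=
  \sum_(s : seed pi) \sum_(phi : realization)
     weight pi s * p phi * (#|selected (act pi s) phi|)%:R.

Definition is_greedy (p : realization -> R) (f : {set V} -> realization -> R)
    (pi : rpolicy) : Prop :=
  forall s, 0 < weight pi s -> forall psi v, act pi s psi = Some v ->
    forall w, gain p f w psi <= gain p f v psi.

Definition selects_exactly (p : realization -> R) (pi : rpolicy) (k : nat) : Prop :=
  forall s phi, 0 < weight pi s -> 0 < p phi -> #|selected (act pi s) phi| = k.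

Definition thr_stop (p : realization -> R) (f : {set V} -> realization -> R)
    (tau : R) (strict : bool) (psi : partial) : bool :=
  [forall v, (psi v == None) ==>
     (if strict then gain p f v psi < tau else gain p f v psi <= tau)].

Definition trunc (d : dpolicy) (stop : partial -> bool) : dpolicy :=
  fun psi => if stop psi then None else d psi.

(* pi^{tau,rho}: an independent coin (true with probability rho) chooses the strict rule *)
Definition subpol (p : realization -> R) (f : {set V} -> realization -> R)
    (pi : rpolicy) (tau rho : R) : rpolicy :=
  @RPolicy (seed pi * bool)%type
    (fun sb => weight pi sb.1 * (if sb.2 then rho else 1 - rho))
    (fun sb => trunc (act pi sb.1) (thr_stop p f tau sb.2)).

Definition term_bound (p : realization -> R) (f : {set V} -> realization -> R)
    (pi : rpolicy) (u : R) : Prop :=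
  forall s phi, 0 < weight pi s -> 0 < p phi ->
    forall v, gain p f v (final_obs (act pi s) phi) <= u.

Definition sel_bound (p : realization -> R) (f : {set V} -> realization -> R)
    (pi : rpolicy) (u : R) : Prop :=
  forall s phi, 0 < weight pi s -> 0 < p phi ->
    forall t v, (t < #|V|)%N -> act pi s (obs (act pi s) phi t) = Some v ->
      u <= gain p f v (obs (act pi s) phi t).

Definition is_Du p f pi (u : R) : Prop :=
  term_bound p f pi u /\ forall u', term_bound p f pi u' -> u <= u'.
Definition is_Dl p f pi (u : R) : Prop :=
  sel_bound p f pi u /\ forall u', sel_bound p f pi u' -> u' <= u.

Definition is_pi_i p f (pi : rpolicy) (i : nat) (tau rho : R) : Prop :=
  [/\ 0 <= tau, (0 <= rho <= 1) & cavg p (subpol p f pi tau rho) = i%:R].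

(* beta_pi(f, p) = eps, i.e. eps is the maximum over integers 1 <= i <= c_avg(pi,p) of
   Delta^u_{pi,i} / Delta^l_{pi,i}  (all these quantities being well defined) *)
Definition beta_is p f (pi : rpolicy) (eps : R) : Prop :=
  [/\ (forall i : nat, (0 < i)%N -> i%:R <= cavg p pi ->
         exists tau rho, is_pi_i p f pi i tau rho),
      (forall (i : nat) tau rho du dl, (0 < i)%N -> i%:R <= cavg p pi ->
         is_pi_i p f pi i tau rho ->
         is_Du p f (subpol p f pi tau rho) du -> is_Dl p f (subpol p f pi tau rho) dl ->
         dl != 0 /\ du / dl <= eps) &
      (exists (i : nat) tau rho du dl, [/\ (0 < i)%N /\ i%:R <= cavg p pi,
         is_pi_i p f pi i tau rho,
         is_Du p f (subpol p f pi tau rho) du, is_Dl p f (subpol p f pi tau rho) dl &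
         du / dl = eps])].

End AdaptiveDefs.

(* Main.v *)
Require Import Defs.
From HB Require Import structures.
From mathcomp Require Import all_boot all_order all_algebra.
From mathcomp Require Import reals.
From mathcomp Require Import ring lra zify.
Set Implicit Arguments. Unset Strict Implicit. Unset Printing Implicit Defensive.
Import Order.TTheory GRing.Theory Num.Theory.
Local Open Scope ring_scope.

Section Constr.
Variables (R : realType) (k : nat) (eps : R).
Hypotheses (Hk : (0 < k)%N) (He : 0 < eps).

Local Notation V := (option 'I_k).
Local Notation Y := unit.
Local Notation real := (realization V Y).

Definition r : R := eps / (1 + eps).
Definition E : R := eps * r ^+ k.-1.
Definition nS (S : {set V}) : nat := #|S :\ None|.
Definition h (n : nat) : R := \sum_(t < n) r ^+ t.
Definition ff (S : {set V}) (phi : real) : R :=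
  h (nS S) + (if (None \in S) && (nS S == k) then E else 0).
Definition pp (phi : real) : R := 1.
Definition phi0 : real := [ffun => tt].

Lemma r_gt0 : 0 < r.
Proof. have He' := He; have h1: 0 < 1 + eps by lra. by rewrite /r divr_gt0. Qed.
Lemma r_lt1 : r < 1.
Proof. have He' := He; have h1: 0 < 1 + eps by lra. rewrite /r ltr_pdivrMr //; lra. Qed.
Lemma r_lteps : r < eps.
Proof. have He' := He; have h1: 0 < 1 + eps by lra. rewrite /r ltr_pdivrMr //; nra. Qed.
Lemma rX_gt0 n : 0 < r ^+ n.
Proof. exact: exprn_gt0 r_gt0. Qed.
Lemma E_ge0 : 0 <= E.
Proof. rewrite /E mulr_ge0 //; [exact: ltW | exact: ltW (rX_gt0 _)]. Qed.
Lemma rX_S n : r ^+ n.+1 < r ^+ n.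
Proof. rewrite exprS; have:=rX_gt0 n; have:=r_lt1; have := r_gt0; nra. Qed.
Lemma rX_dec m n : (m < n)%N -> r ^+ n < r ^+ m.
Proof.
elim: n => // n IH; rewrite ltnS leq_eqVlt => /orP[/eqP->|/IH h];
  [exact: rX_S | exact: lt_trans (rX_S n) h].
Qed.

Lemma hS n : h n.+1 = h n + r ^+ n.
Proof. by rewrite /h big_ord_recr. Qed.

Lemma phiE (phi : real) : phi = phi0.
Proof. by apply/ffunP => v; rewrite ffunE; case: (phi v). Qed.

Lemma sum_cons (psi : partial V Y) (F : real -> R) :
  \sum_(phi | consistent phi psi) F phi = F phi0.
Proof.
rewrite (big_pred1 phi0) // => phi /=.
rewrite (phiE phi) eqxx; apply/forallP => v; by case: (psi v) => // -[]; case: (phi0 v).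
Qed.

Lemma sum_all (F : real -> R) : \sum_(phi : real) F phi = F phi0.
Proof. by rewrite (big_pred1 phi0) // => phi /=; rewrite (phiE phi) eqxx. Qed.

Lemma gainE v psi : gain pp ff v psi = ff (v |: dom psi) phi0 - ff (dom psi) phi0.
Proof. by rewrite /gain !sum_cons /pp divr1 mul1r. Qed.


Lemma in_dom (psi : partial V Y) v : (v \in dom psi) = (psi v != None).
Proof. by rewrite /dom inE. Qed.

Lemma dom_upd (psi : partial V Y) v y : dom (upd psi v y) = v |: dom psi.
Proof. by apply/setP => x; rewrite /dom !inE ffunE; case: (x =P v). Qed.

Lemma nS_add v (S : {set V}) : v != None -> v \notin S -> nS (v |: S) = (nS S).+1.
Proof.
move=> vN vS; rewrite /nS.
have -> : (v |: S) :\ None = v |: (S :\ None).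
  by apply/setP => x; rewrite !inE; case: (x =P None) => [->|_] //=; rewrite eq_sym (negbTE vN).
by rewrite cardsU1 !inE (negbTE vS) andbF.
Qed.

Lemma nS_addNone (S : {set V}) : nS (None |: S) = nS S.
Proof.
rewrite /nS; have -> // : (None |: S) :\ None = S :\ None.
by apply/setP => x; rewrite !inE; case: (x =P None).
Qed.

Lemma nS_noNone (S : {set V}) : None \notin S -> nS S = #|S|.
Proof.
move=> h; rewrite /nS; have -> // : S :\ None = S.
by apply/setP => x; rewrite !inE; case: (x =P None) => // ->; rewrite (negbTE h).
Qed.

Lemma nS_ltk (S : {set V}) j : Some j \notin S -> (nS S < k)%N.
Proof.
move=> hj; have sub : S :\ None \subset ~: [set None; Some j].
  apply/subsetP => x; rewrite !inE; case: eqP => //= _; case: eqP => // -> /=.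
  by rewrite (negbTE hj).
have hV : #|{: V}| = k.+1 by rewrite card_option card_ord.
have := subset_leq_card sub; rewrite (cardsCs (~: [set None; Some j])) setCK hV cards2 /nS /= => le; lia.
Qed.

Lemma nS_lek (S : {set V}) : (nS S <= k)%N.
Proof.
have sub : S :\ None \subset ~: [set None].
  by apply/subsetP => x; rewrite !inE; case: eqP.
have hV : #|{: V}| = k.+1 by rewrite card_option card_ord.
have := subset_leq_card sub; rewrite (cardsCs (~: [set None : V])) setCK hV cards1 /nS /= => le; lia.
Qed.

Lemma nS_free (S : {set V}) : (nS S < k)%N -> exists j, Some j \notin S.
Proof.
move=> lt; apply/existsP; apply: contraLR lt; rewrite negb_exists => /forallP H.
rewrite -leqNgt.
have sub : [set Some j | j : 'I_k] \subset S :\ None.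
  by apply/subsetP => x /imsetP [j _ ->]; rewrite !inE /=; have := H j; rewrite negbK.
have := subset_leq_card sub; rewrite card_imset ?card_ord //; exact: Some_inj.
Qed.


Lemma gain_in v (psi : partial V Y) : v \in dom psi -> gain pp ff v psi = 0.
Proof.
move=> hv; rewrite gainE.
have -> : v |: dom psi = dom psi.
  by apply/setP => x; rewrite in_setU1; case: (x =P v) => // ->; rewrite hv.
by rewrite subrr.
Qed.

Lemma gain_Some j (psi : partial V Y) : Some j \notin dom psi ->
  gain pp ff (Some j) psi = r ^+ nS (dom psi) +
     (if (None \in dom psi) && ((nS (dom psi)).+1 == k) then E else 0).
Proof.
move=> hj; rewrite gainE /ff nS_add // in_setU1 /= hS.
have lt := nS_ltk hj; rewrite (ltn_eqF lt) andbF.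
by set X := (if _ then _ else _); set n := nS _; ring.
Qed.

Lemma gain_None (psi : partial V Y) : None \notin dom psi ->
  gain pp ff None psi = if nS (dom psi) == k then E else 0.
Proof.
move=> hN; rewrite gainE /ff nS_addNone setU11 (negbTE hN) /=.
by set X := (if _ then _ else _); set n := nS _; ring.
Qed.

Definition D0 : dpolicy V Y := fun psi =>
  if [pick j | psi (Some j) == None] is Some j then Some (Some j) else None.

Lemma D0_some psi v : D0 psi = Some v -> exists j, v = Some j /\ Some j \notin dom psi.
Proof.
rewrite /D0; case: pickP => // j hj [<-]; exists j; split => //.
by rewrite in_dom negbK.
Qed.

Lemma D0_None psi : D0 psi = None <-> ~~ (nS (dom psi) < k)%N.
Proof.
rewrite /D0; case: pickP => [j hj | hn]; split => //.
  by move/negP; case; apply: (@nS_ltk _ j); rewrite in_dom negbK.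
move=> _; apply/negP => /nS_free [j]; rewrite in_dom negbK => hj.
by have := hn j; rewrite hj.
Qed.

Lemma D0_greedy psi v : D0 psi = Some v -> forall w, gain pp ff w psi <= gain pp ff v psi.
Proof.
case/D0_some => j [-> hj] w.
have gv : r ^+ nS (dom psi) <= gain pp ff (Some j) psi.
  rewrite gain_Some // lerDl; case: ifP => // _; exact: E_ge0.
have gpos := lt_le_trans (rX_gt0 (nS (dom psi))) gv.
case: (boolP (w \in dom psi)) => hw; first by rewrite gain_in // ltW.
case: w hw => [j'|] hw; first by rewrite !gain_Some.
rewrite gain_None // (ltn_eqF (nS_ltk hj)); exact: ltW.
Qed.


Definition Nspec (c : nat -> bool) (N : nat) := (forall m, (m < N)%N -> c m) /\ ~~ c N.

Lemma Nspec_uniq c N N' : Nspec c N -> Nspec c N' -> N = N'.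
Proof.
move=> [h1 h2] [h1' h2']; apply/eqP; rewrite eqn_leq; apply/andP; split;
  rewrite leqNgt; apply/negP => lt.
  by move: h2'; rewrite h1.
by move: h2; rewrite h1'.
Qed.

Lemma Nspec_ex c : ~~ c k -> exists N, (N <= k)%N /\ Nspec c N.
Proof.
move=> hk; have ex : exists n, ~~ c n by exists k.
case: (ex_minnP ex) => N hN hmin; exists N; split; first exact: hmin.
split => // m lt; apply/negPn/negP => hm; have := hmin _ hm; rewrite leqNgt lt.
by [].
Qed.

Lemma dom_empty : dom (empty_partial V Y) = set0.
Proof. by apply/setP => x; rewrite /dom !inE ffunE. Qed.

Lemma nS0 : nS set0 = 0%N.
Proof. by rewrite /nS set0D cards0. Qed.

Section Run.
Variables (D : dpolicy V Y) (c : nat -> bool) (N : nat).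
Hypotheses
 (H1 : forall psi, None \notin dom psi -> ~~ c (nS (dom psi)) -> D psi = None)
 (H2 : forall psi v, D psi = Some v -> v != None /\ v \notin dom psi)
 (H3 : forall psi, None \notin dom psi -> c (nS (dom psi)) -> D psi <> None)
 (HN : Nspec c N) (HNk : (N <= k)%N).

Lemma run phi t : None \notin dom (obs D phi t) /\ nS (dom (obs D phi t)) = minn t N.
Proof.
case: HN => HN1 HN2.
elim: t => [|t [IH1 IH2]]; first by rewrite /obs /= dom_empty inE nS0 min0n.
change (obs D phi t.+1) with (step D phi (obs D phi t)).
move: IH1 IH2; set psi := obs D phi t => IH1 IH2.
case: (ltnP t N) => ltN.
  have ct : c (nS (dom psi)).
    rewrite IH2; have -> : minn t N = t by lia.
    exact: HN1.
  have := H3 IH1 ct; case e: (D psi) => [v|] // _.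
  have [vN vd] := H2 e.
  rewrite /step e dom_upd in_setU1 eq_sym (negbTE vN) IH1 nS_add // IH2.
  split => //; lia.
have cN : ~~ c (nS (dom psi)).
  by rewrite IH2; have -> : minn t N = N by lia.
rewrite /step (H1 IH1 cN); split => //; rewrite IH2; lia.
Qed.

Lemma card_sel phi : #|selected D phi| = N.
Proof.
have [h1 h2] := run phi #|{: V}|.
rewrite /selected /final_obs -nS_noNone // h2 card_option card_ord; lia.
Qed.

Lemma run_sel phi t v : D (obs D phi t) = Some v ->
  (t < N)%N /\ gain pp ff v (obs D phi t) = r ^+ t.
Proof.
have [h1 h2] := run phi t; move=> e.
case: (ltnP t N) => lt; last first.
  suff: D (obs D phi t) = None by rewrite e.
  apply: H1 => //; rewrite h2; have -> : minn t N = N by lia.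
  by case: HN.
have [vN vd] := H2 e; split => //; case: v vN vd {e} => [j|] // _ vd.
rewrite gain_Some // (negbTE h1) /= addr0 h2; congr (_ ^+ _); lia.
Qed.

Lemma run_sel_ex phi : (0 < N)%N -> exists v, D (obs D phi N.-1) = Some v.
Proof.
move=> N0; have [h1 h2] := run phi N.-1.
case e: (D _) => [v|]; first by exists v.
exfalso; apply: (H3 h1) e; rewrite h2; case: HN => HN1 _; apply: HN1; lia.
Qed.

Definition g (n : nat) : R := if (n < k)%N then r ^+ n else E.

Lemma g_ge0 n : 0 <= g n.
Proof. rewrite /g; case: ifP => _; [exact: ltW (rX_gt0 _) | exact: E_ge0]. Qed.

Lemma run_final phi :
  (forall v, gain pp ff v (final_obs D phi) <= g N) /\
  exists v, gain pp ff v (final_obs D phi) = g N.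
Proof.
have [h1 h2] := run phi #|{: V}|.
have hn : nS (dom (final_obs D phi)) = N.
  by rewrite /final_obs h2 card_option card_ord; lia.
split.
  move=> v; case: (boolP (v \in dom (final_obs D phi))) => hv.
    by rewrite gain_in // g_ge0.
  case: v hv => [j|] hv.
    by rewrite gain_Some // (negbTE h1) /= addr0 hn /g; have := nS_ltk hv; rewrite hn => ->.
  rewrite gain_None // hn /g; case: eqP => [->|_]; first by rewrite ltnn.
  exact: g_ge0.
case: (ltnP N k) => lt.
  have [j hj] : exists j, Some j \notin dom (final_obs D phi) by apply: nS_free; rewrite hn.
  by exists (Some j); rewrite gain_Some // (negbTE h1) /= addr0 hn /g lt.
exists None; rewrite gain_None // hn /g.
have -> : N = k by lia.
by rewrite eqxx ltnn.
Qed.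

End Run.


Definition stopb (tau : R) (b : bool) (n : nat) : bool :=
  if b then r ^+ n < tau else r ^+ n <= tau.
Definition cb tau b n := (n < k)%N && ~~ stopb tau b n.

Lemma thr_reach tau b (psi : partial V Y) : None \notin dom psi ->
  (nS (dom psi) < k)%N -> thr_stop pp ff tau b psi = stopb tau b (nS (dom psi)).
Proof.
move=> hN lt; apply/idP/idP.
  move/forallP => H; have [j hj] := nS_free lt.
  have hj' : (psi (Some j) == None) = true by move: hj; rewrite in_dom negbK.
  have := H (Some j); rewrite hj' /= gain_Some // (negbTE hN) /= addr0.
  by case: b {H}.
move=> st; apply/forallP => v; apply/implyP => hv.
have {}hv : v \notin dom psi by rewrite in_dom negbK.
have rp := rX_gt0 (nS (dom psi)).
case: v hv => [j|] hv.
  by rewrite gain_Some // (negbTE hN) /= addr0; case: b st.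
rewrite gain_None // (ltn_eqF lt); case: b st => /= st.
  exact: lt_trans rp st.
exact: le_trans (ltW rp) st.
Qed.

Definition Dt tau b : dpolicy V Y := trunc D0 (thr_stop pp ff tau b).

Lemma D0_H2 psi v : D0 psi = Some v -> v != None /\ v \notin dom psi.
Proof. by case/D0_some => j [-> hj]. Qed.

Lemma D0_H1 psi : None \notin dom psi -> ~~ (nS (dom psi) < k)%N -> D0 psi = None.
Proof. by move=> _ /D0_None. Qed.

Lemma D0_H3 psi : None \notin dom psi -> (nS (dom psi) < k)%N -> D0 psi <> None.
Proof. by move=> _ lt /D0_None; rewrite lt. Qed.

Lemma Dt_H2 tau b psi v : Dt tau b psi = Some v -> v != None /\ v \notin dom psi.
Proof. by rewrite /Dt /trunc; case: ifP => // _; exact: D0_H2. Qed.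

Lemma Dt_H1 tau b psi : None \notin dom psi -> ~~ cb tau b (nS (dom psi)) ->
  Dt tau b psi = None.
Proof.
move=> hN; rewrite /cb /Dt /trunc; case: (ltnP (nS (dom psi)) k) => lt /=.
  by rewrite negbK thr_reach // => ->.
move=> _; rewrite D0_H1 //; first by case: ifP. by rewrite -leqNgt.
Qed.

Lemma Dt_H3 tau b psi : None \notin dom psi -> cb tau b (nS (dom psi)) ->
  Dt tau b psi <> None.
Proof.
move=> hN /andP [lt st]; rewrite /Dt /trunc thr_reach // (negbTE st).
exact: D0_H3.
Qed.

Lemma cb_k tau b : ~~ cb tau b k.
Proof. by rewrite /cb ltnn. Qed.

Lemma N01 tau N0 N1 : Nspec (cb tau false) N0 -> Nspec (cb tau true) N1 ->
  (N0 <= N1 <= N0.+1)%N.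
Proof.
move=> [a0 b0] [a1 b1]; apply/andP; split; rewrite leqNgt; apply/negP => lt.
  have := a0 _ lt; move: b1; rewrite /cb /stopb negb_and negbK.
  case/orP => [/negbTE -> //|h /andP [_ h']]; move: h'; rewrite -ltNge.
  by move=> h''; have := lt_trans h h''; rewrite ltxx.
have h1 := a1 _ lt; have h2 := a1 N0 (leq_trans (leqnSn _) lt).
move: b0 h1 h2; rewrite /cb /stopb /= negb_and negbK.
case/orP => [/negbTE -> //|st /andP [_ h1] /andP [_ _]].
move: h1; rewrite -leNgt => h1.
by have := lt_le_trans (rX_S N0) st; rewrite ltNge h1.
Qed.


Definition pi0 : rpolicy R V Y := @RPolicy R V Y unit (fun _ => 1) (fun _ => D0).

Lemma sum_ub (F : unit * bool -> R) :
  \sum_(sb : unit * bool) F sb = F (tt, true) + F (tt, false).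
Proof.
rewrite (bigD1 (tt, true)) //= (bigD1 (tt, false)) //= big1 ?addr0 //.
by move=> [[] []]; rewrite eqxx ?andbF.
Qed.

Lemma sum_u (F : unit -> R) : \sum_(s : unit) F s = F tt.
Proof. by rewrite (big_pred1 tt) // => -[]. Qed.

Lemma Nspec_le c N : ~~ c k -> Nspec c N -> (N <= k)%N.
Proof. move=> hk [h1 _]; rewrite leqNgt; apply/negP => lt; by rewrite h1 in hk. Qed.

Lemma card_Dt tau b N phi : Nspec (cb tau b) N ->
  #|selected (trunc D0 (thr_stop pp ff tau b)) phi| = N.
Proof.
move=> HN; exact: (card_sel (@Dt_H1 tau b) (@Dt_H2 tau b) (@Dt_H3 tau b) HN
   (Nspec_le (cb_k tau b) HN) phi).
Qed.

Lemma cavg_sub tau rho N0 N1 : Nspec (cb tau false) N0 -> Nspec (cb tau true) N1 ->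
  cavg pp (subpol pp ff pi0 tau rho) = rho * N1%:R + (1 - rho) * N0%:R.
Proof.
move=> H0 H1; rewrite /cavg sum_ub /= !sum_all /pp.
by rewrite (card_Dt _ H0) (card_Dt _ H1) !mul1r !mulr1.
Qed.

Lemma act_N tau rho i : (0 <= rho <= 1) ->
  cavg pp (subpol pp ff pi0 tau rho) = i%:R ->
  forall b, 0 < (if b then rho else 1 - rho) -> Nspec (cb tau b) i.
Proof.
move=> /andP [r0 r1] e.
have [N0 [_ H0]] := Nspec_ex (cb_k tau false).
have [N1 [_ H1]] := Nspec_ex (cb_k tau true).
rewrite (cavg_sub _ H0 H1) in e; have := N01 H0 H1 => /andP [l1 l2].
have [eN|eN] : N1 = N0 \/ N1 = (N0 + 1)%N by lia.
  have : (N0%:R : R) = i%:R by rewrite -e eN; ring.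
  move/eqP; rewrite eqr_nat => /eqP eNi.
  by move=> [] _; [rewrite -eNi -eN | rewrite -eNi].
rewrite eN natrD in e.
move=> [] /= hb.
  have a1 : (N0%:R : R) < i%:R by nra.
  have a2 : (i%:R : R) <= N0%:R + 1 by nra.
  rewrite ltr_nat in a1; rewrite natr1 ler_nat in a2.
  have <- : (N0 + 1)%N = i by lia.
  by rewrite -eN.
have a1 : (N0%:R : R) <= i%:R by nra.
have a2 : (i%:R : R) < N0%:R + 1 by nra.
rewrite ler_nat in a1; rewrite natr1 ltr_nat in a2.
have <- : N0 = i by lia.
by [].
Qed.

Lemma active (rho : R) : 0 <= rho <= 1 -> exists b : bool, 0 < (if b then rho else 1 - rho).
Proof.
move=> /andP [r0 r1]; case: (ltrP 0 rho) => h; first by exists true.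
by exists false; lra.
Qed.

Lemma Du_char tau rho i : (0 <= rho <= 1) ->
  cavg pp (subpol pp ff pi0 tau rho) = i%:R ->
  forall u, term_bound pp ff (subpol pp ff pi0 tau rho) u <-> g i <= u.
Proof.
move=> hr e u; have HN := act_N hr e; split.
  move=> H; have [b hb] := active hr.
  have HNb := HN b hb.
  have [_ [v hv]] := run_final (@Dt_H1 tau b) (@Dt_H2 tau b) (@Dt_H3 tau b) HNb
     (Nspec_le (cb_k tau b) HNb) phi0.
  rewrite -hv; apply: (H (tt, b)) => /=; last by rewrite /pp.
  by rewrite mul1r.
move=> le [[] b] phi /= hw _ v; rewrite mul1r in hw.
have HNb := HN b hw.
have [h _] := run_final (@Dt_H1 tau b) (@Dt_H2 tau b) (@Dt_H3 tau b) HNb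
     (Nspec_le (cb_k tau b) HNb) phi.
exact: le_trans (h v) le.
Qed.

Lemma Dl_char tau rho i : (0 < i)%N -> (0 <= rho <= 1) ->
  cavg pp (subpol pp ff pi0 tau rho) = i%:R ->
  forall u, sel_bound pp ff (subpol pp ff pi0 tau rho) u <-> u <= r ^+ i.-1.
Proof.
move=> i0 hr e u; have HN := act_N hr e; split.
  move=> H; have [b hb] := active hr.
  have HNb := HN b hb.
  have HNk := Nspec_le (cb_k tau b) HNb.
  have [v hv] := run_sel_ex (@Dt_H1 tau b) (@Dt_H2 tau b) (@Dt_H3 tau b) HNb
     HNk phi0 i0.
  have [_ hg] := run_sel (@Dt_H1 tau b) (@Dt_H2 tau b) (@Dt_H3 tau b) HNb HNk hv.
  rewrite -hg; apply: (H (tt, b)) => //=; first by rewrite mul1r.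
  by rewrite card_option card_ord; lia.
move=> le [[] b] phi /= hw _ t v ht hv; rewrite mul1r in hw.
have HNb := HN b hw.
have HNk := Nspec_le (cb_k tau b) HNb.
have [lt ->] := run_sel (@Dt_H1 tau b) (@Dt_H2 tau b) (@Dt_H3 tau b) HNb HNk hv.
apply: le_trans le _.
have : (t <= i.-1)%N by lia.
rewrite leq_eqVlt => /orP [/eqP -> //| lt']; exact: ltW (rX_dec lt').
Qed.


Lemma Nspec_k : Nspec (fun n => (n < k)%N) k.
Proof. by split => //; rewrite ltnn. Qed.

Lemma card_D0 phi : #|selected D0 phi| = k.
Proof. exact: (card_sel D0_H1 D0_H2 D0_H3 Nspec_k (leqnn k) phi). Qed.

Lemma cavg_pi0 : cavg pp pi0 = k%:R.
Proof. by rewrite /cavg sum_u sum_all /pp /= card_D0 !mul1r. Qed.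

Definition tau_of (i : nat) : R := if (i < k)%N then r ^+ i else 0.

Lemma pi_i_ex i : (0 < i)%N -> (i <= k)%N -> is_pi_i pp ff pi0 i (tau_of i) 0.
Proof.
move=> i0 ik.
have H0 : Nspec (cb (tau_of i) false) i.
  split.
    move=> m lt; rewrite /cb /stopb /tau_of; apply/andP; split; first by lia.
    rewrite -ltNge; case: ifP => _; first exact: rX_dec.
    exact: rX_gt0.
  rewrite /cb /stopb /tau_of negb_and; case: ifP => //= _.
  by rewrite lexx.
have [N1 [_ H1]] := Nspec_ex (cb_k (tau_of i) true).
split.
- rewrite /tau_of; case: ifP => _; [exact: ltW (rX_gt0 _) | exact: lexx].
- by rewrite lexx ler01.
- by rewrite (cavg_sub _ H0 H1) mul0r add0r subr0 mul1r.
Qed.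

Lemma ratio_le i : (0 < i)%N -> (i <= k)%N -> g i / r ^+ i.-1 <= eps.
Proof.
move=> i0 ik; have nz : r ^+ i.-1 != 0 := lt0r_neq0 (rX_gt0 _).
rewrite /g; case: ifP => lt.
  have -> : r ^+ i = r * r ^+ i.-1 by rewrite -exprS prednK.
  rewrite mulfK //; exact: ltW r_lteps.
have ek : i = k by lia.
by rewrite /E -ek mulfK.
Qed.

Lemma ratio_k : g k / r ^+ k.-1 = eps.
Proof.
have nz : r ^+ k.-1 != 0 := lt0r_neq0 (rX_gt0 _).
by rewrite /g ltnn /E mulfK.
Qed.

Lemma main : exists (V' Y' : finType) (p : realization V' Y' -> R)
         (f : {set V'} -> realization V' Y' -> R) (pi : rpolicy R V' Y'),
    [/\ is_prior p, is_rpolicy pi, is_greedy p f pi,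
        selects_exactly p pi k & beta_is p f pi eps].
Proof.
exists V, Y, pp, ff, pi0; split.
- split => [phi|]; first by rewrite /pp ler01.
  by rewrite sum_all.
- split => //=.
  + by rewrite sum_u.
  + move=> _ psi v /D0_some [j [-> hj]]; apply/eqP; by rewrite in_dom negbK in hj.
- move=> s _ psi v /= e w; exact: D0_greedy e w.
- by move=> s phi _ _ /=; rewrite card_D0.
split.
- move=> i i0 hi; have ik : (i <= k)%N by rewrite cavg_pi0 ler_nat in hi.
  by exists (tau_of i), 0; apply: pi_i_ex.
- move=> i tau rho du dl i0 hi [t0 hr e] [tb tmin] [sb smax].
  have ik : (i <= k)%N by rewrite cavg_pi0 ler_nat in hi.
  have edu : du = g i.
    apply/le_anti/andP; split.
      by apply: tmin; apply/(Du_char hr e).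
    exact/(Du_char hr e).
  have edl : dl = r ^+ i.-1.
    apply/le_anti/andP; split.
      exact/(Dl_char i0 hr e).
    by apply: smax; apply/(Dl_char i0 hr e).
  rewrite edu edl; split; first exact: lt0r_neq0 (rX_gt0 _).
  exact: ratio_le.
- have [t0 hr e] := pi_i_ex Hk (leqnn k).
  exists k, (tau_of k), 0, (g k), (r ^+ k.-1); split.
  + by split => //; rewrite cavg_pi0.
  + exact: pi_i_ex.
  + split; first by apply/(Du_char hr e).
    by move=> u /(Du_char hr e).
  + split; first by apply/(Dl_char Hk hr e).
    by move=> u /(Dl_char Hk hr e).
  + exact: ratio_k.
Qed.

End Constr.

Unset Implicit Arguments. Set Strict Implicit.

Theorem theorem7 (R : realType) (k : nat) (eps : R) :
  (0 < k)%N -> 0 < eps ->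
  exists (V Y : finType) (p : realization V Y -> R)
         (f : {set V} -> realization V Y -> R) (pi : rpolicy R V Y),
    [/\ is_prior p, is_rpolicy pi, is_greedy p f pi,
        selects_exactly p pi k & beta_is p f pi eps].
Proof. by move=> Hk He; exact: main. Qed.
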